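(* Let $d\ge3$, let $\lambda$ be real, and let $\sigma$ be a Hermitian operator on $\mathbb{C}^d\otimes\mathbb{C}^d$ whose partial transpose is $\sigma^{PT}=\lambda I-(\lambda+1)|\Phi_0\rangle\langle\Phi_0|$, where $|\Phi_0\rangle=\frac{1}{\sqrt d}\sum_{j=0}^{d-1}|jj\rangle$. Then: (1) if $\lambda\ge 2/(d-2)$, then $\langle v|\sigma^{PT}|v\rangle\ge0$ for every vector $|v\rangle$ of Schmidt rank two (i.e. $\sigma$ is pseudo one-copy undistillable); (2) if $\lambda<2/(d-2)$, then there exists a vector $|v\rangle$ of Schmidt rank two with $\langle v|\sigma^{PT}|v\rangle<0$.
   Context: The partial transpose on the second factor is $\langle ij|X^{PT}|kl\rangle=\langle il|X|kj\rangle$. A (possibly unnormalized) state $\sigma$ is called pseudo one-copy undistillable if $\langle\phi|\sigma^{PT}|\phi\rangle\ge0$ for all vectors $|\phi\rangle$ of Schmidt rank two. *)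

(* Defs.v *)
From HB Require Import structures.
From mathcomp Require Import all_boot all_order all_algebra.
From mathcomp Require Import reals complex.
Set Implicit Arguments. Unset Strict Implicit. Unset Printing Implicit Defensive.
Import Order.TTheory GRing.Theory Num.Theory.
Local Open Scope ring_scope.

Section Defs.
Variable C : numClosedFieldType.
Variable d : nat.

(* Basis of C^d (x) C^d: index a : 'I_(d*d) corresponds to |i j>, via
   mathcomp's mxvec_index i j (its inverse is tidx). *)
Definition tidx (a : 'I_(d * d)) : 'I_d * 'I_d :=
  enum_val (cast_ord (esym (@mxvec_cast d d)) a).

(* Partial transpose on the second factor: <ij|X^PT|kl> = <il|X|kj>. *)
Definition ptrans (X : 'M[C]_(d * d)) : 'M[C]_(d * d) :=
  \matrix_(a, b) X (mxvec_index (tidx a).1 (tidx b).2)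
                   (mxvec_index (tidx b).1 (tidx a).2).

Definition adj {m n} (A : 'M[C]_(m, n)) : 'M[C]_(n, m) := map_mx Num.conj A^T.

Definition hermitian_op (X : 'M[C]_(d * d)) : Prop := adj X = X.

(* The ket of the vector sum_{ij} V i j |ij>, given its d x d coefficient
   matrix V; its Schmidt rank is \rank V. *)
Definition ket (V : 'M[C]_d) : 'cV[C]_(d * d) := (mxvec V)^T.

Definition schmidt_rank (V : 'M[C]_d) : nat := \rank V.

Definition expval (X : 'M[C]_(d * d)) (V : 'M[C]_d) : C :=
  (adj (ket V) *m X *m ket V) 0 0.

Definition Phi0 : 'cV[C]_(d * d) :=
  \col_a (if (tidx a).1 == (tidx a).2 then (sqrtC d%:R)^-1 else 0).

End Defs.

(* Main.v *)
Require Import Defs.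
Set Warnings "-notation-overridden,-ambiguous-paths".
From HB Require Import structures.
From mathcomp Require Import all_boot all_order all_algebra.
From mathcomp Require Import reals complex spectral ring lra zify.
Import Order.TTheory GRing.Theory Num.Theory.
Set Implicit Arguments. Unset Strict Implicit.
Local Open Scope ring_scope.

Section Aux.
Variable C : numClosedFieldType.
Local Notation cj A := (map_mx Num.conj (trmx A)).

Lemma tr_cj_ge0 m n (A : 'M[C]_(m,n)) : 0 <= \tr (A *m cj A).
Proof.
rewrite /mxtrace; apply: sumr_ge0 => i _; rewrite mxE; apply: sumr_ge0 => j _.
rewrite !mxE; exact: mul_conjC_ge0.
Qed.

Lemma cjK m n (A : 'M[C]_(m,n)) : cj (cj A) = A.
Proof. by apply/matrixP => i j; rewrite !mxE conjCK. Qed.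

Lemma cjM m n p (A : 'M[C]_(m,n)) (B : 'M[C]_(n,p)) : cj (A *m B) = cj B *m cj A.
Proof.
apply/matrixP => i j; rewrite !mxE rmorph_sum; apply: eq_bigr => k _.
by rewrite !mxE rmorphM mulrC.
Qed.

Lemma tr_cj n (A : 'M[C]_n) : \tr (cj A) = (\tr A)^*.
Proof. by rewrite /mxtrace rmorph_sum; apply: eq_bigr => i _; rewrite !mxE. Qed.

Lemma rank2_ineq d (V : 'M[C]_d) : \rank V = 2%N ->
  \tr V * (\tr V)^* <= 2%:R * \tr (V *m cj V).
Proof.
move=> rV.
set Q := schmidt (row_base V).
have Qu : Q *m cj Q = 1%:M.
  by apply/eqP; have := schmidt_unitarymx (row_base V) (rank_leq_col V).
have VQ : (V <= Q)%MS.
  by rewrite (eqmx_schmidt_free (row_base_free V)) eq_row_base.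
have eW : V *m pinvmx Q *m Q = V := mulmxKpV VQ.
have VPV : V *m (cj Q *m Q) = V.
  by rewrite -{1}eW -[_ *m Q *m (cj Q *m Q)]mulmxA (mulmxA Q) Qu mul1mx eW.
set P := cj Q *m Q.
have cP : cj P = P by rewrite /P cjM cjK.
have PP : P *m P = P by rewrite /P mulmxA -(mulmxA (cj Q)) Qu mulmx1.
have trP : \tr P = 2%:R by rewrite /P mxtrace_mulC Qu mxtrace1 rV.
have PV : P *m cj V = cj V by rewrite -{1}cP -cjM VPV.
set t := \tr V.
set c := t / 2%:R.
have H := tr_cj_ge0 (V - c *: P).
have E : cj (V - c *: P) = cj V - c^* *: P.
  by rewrite -[in RHS]cP; apply/matrixP => i j; rewrite !mxE rmorphB rmorphM.
rewrite E mulmxBl !mulmxBr -!scalemxAl -!scalemxAr VPV PV PP in H.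
rewrite !raddfB /= !mxtraceZ tr_cj trP -/t in H.
have cc : c^* = t^* / 2%:R by rewrite /c rmorphM fmorphV rmorph_nat.
rewrite cc /c in H.
rewrite -subr_ge0.
set N := \tr (V *m cj V) in H *.
have -> : 2%:R * N - t * t^* = (N - t^* / 2%:R * t + (- (t / 2%:R * t^*) - - (t / 2%:R * (t^* / 2%:R * 2%:R)))) * 2%:R.
  by field.
by rewrite pmulr_lge0 // ltr0n.
Qed.


Lemma sum_mxvec d (F : 'I_(d * d) -> C) :
  \sum_a F a = \sum_i \sum_j F (mxvec_index i j).
Proof.
rewrite pair_big (reindex (uncurry (@mxvec_index d d))) /=.
  by apply: eq_bigr => -[i j] _.
have [g h1 h2] := curry_mxvec_bij d d.
by exists g => [x _|y _]; [apply: h1|apply: h2].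
Qed.

Lemma tidxE d (i j : 'I_d) : tidx (mxvec_index i j) = (i, j).
Proof. by rewrite /tidx /mxvec_index cast_ordK enum_rankK. Qed.

Lemma sum_delta n (i : 'I_n) (f : 'I_n -> C) (s : C) :
  \sum_j f j * (if i == j then s else 0) = f i * s.
Proof.
rewrite (bigD1 i) //= eqxx big1 ?addr0 // => j /negbTE.
by rewrite eq_sym => ->; rewrite mulr0.
Qed.

Lemma expval_form d (a b : C) (V : 'M[C]_d) :
  expval (a%:M - b *: (Phi0 C d *m adj (Phi0 C d))) V =
  a * \tr (V *m cj V) - b * (\tr V * (\tr V)^* / d%:R).
Proof.
rewrite /expval mulmxBr mulmxBl mul_mx_scalar -scalemxAr -!scalemxAl.
rewrite (mulmxA (adj (ket V)) (Phi0 C d)) -(mulmxA (adj (ket V) *m Phi0 C d)).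
rewrite !mxE big_ord1.
set s := sqrtC (d%:R : C).
have sc : s^-1^* = s^-1.
  by rewrite fmorphV; congr (_^-1); apply: conj_Creal; rewrite sqrtC_real // ler0n.
have ss : s^-1 * s^-1 = d%:R^-1 by rewrite -invfM -expr2 sqrtCK.
have N1 : \sum_j adj (ket V) 0 j * ket V j 0 = \tr (V *m cj V).
  rewrite sum_mxvec /mxtrace; apply: eq_bigr => i _; rewrite mxE.
  by apply: eq_bigr => j _; rewrite !mxE mxvecE mulrC.
have A1 : (adj (ket V) *m Phi0 C d) 0 0 = (\tr V)^* * s^-1.
  rewrite mxE sum_mxvec /mxtrace rmorph_sum mulr_suml; apply: eq_bigr => i _.
  rewrite -(sum_delta i (fun j => (V i j)^*)); apply: eq_bigr => j _.
  by rewrite !mxE mxvecE tidxE.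
have B1 : (adj (Phi0 C d) *m ket V) 0 0 = \tr V * s^-1.
  rewrite mxE sum_mxvec /mxtrace mulr_suml; apply: eq_bigr => i _.
  rewrite -(sum_delta i (fun j => V i j)); apply: eq_bigr => j _.
  rewrite !mxE mxvecE tidxE /=.
  by case: eqP => _; rewrite ?rmorph0 ?sc mulrC.
rewrite N1 A1 B1.
have -> : (\tr V)^* * s^-1 * (\tr V * s^-1) = \tr V * (\tr V)^* * (s^-1 * s^-1) by ring.
by rewrite ss.
Qed.


Lemma tr_pid2 k : \tr (pid_mx 2 : 'M[C]_(k.+2)) = 2%:R.
Proof.
rewrite /mxtrace 2!big_ord_recl big1 => [|i _]; rewrite !mxE /=.
  by rewrite addr0.
by rewrite eqxx /bump !leq0n !add1n.
Qed.

Lemma cj_pid n : cj (pid_mx 2 : 'M[C]_n) = pid_mx 2.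
Proof. by rewrite tr_pid_mx; apply/matrixP => i j; rewrite !mxE rmorph_nat. Qed.

End Aux.

Local Open Scope complex_scope.

Theorem theorem2 (R : realType) (d : nat) (lam : R) (sigma : 'M[R[i]]_(d * d)) :
  (3 <= d)%N ->
  hermitian_op sigma ->
  ptrans sigma = (lam%:C)%:M - (lam%:C + 1) *: (Phi0 R[i] d *m adj (Phi0 R[i] d)) ->
  ((2 / (d%:R - 2) <= lam ->
     forall V : 'M[R[i]]_d, schmidt_rank V = 2%N -> 0 <= expval (ptrans sigma) V) /\
   (lam < 2 / (d%:R - 2) ->
     exists V : 'M[R[i]]_d, schmidt_rank V = 2%N /\ expval (ptrans sigma) V < 0)).
Proof.
move=> d3 _ ->.
have d2 : (2 : R) < d%:R by rewrite ltr_nat.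
have d0 : (0 : R) < d%:R by lra.
have dm : (0 : R) < d%:R - 2 by lra.
have bE : lam%:C + 1 = (lam + 1)%:C by rewrite rmorphD rmorph1.
split.
- move=> Hl V rV; rewrite expval_form.
  have hT := rank2_ineq rV.
  set T := \tr V * _ in hT *; set N := \tr (V *m _) in hT *.
  have N0 : 0 <= N := tr_cj_ge0 V.
  have hl : 2 <= lam * (d%:R - 2) by rewrite -ler_pdivrMr.
  have l0 : 0 <= lam + 1 by nra.
  have key : (lam + 1) * 2 / d%:R <= lam by rewrite ler_pdivrMr //; nra.
  have b0 : 0 <= lam%:C + 1 by rewrite bE ler0c.
  have keyC : (lam%:C + 1) * 2%:R / d%:R <= lam%:C.
    by rewrite bE -(rmorph_nat (real_complex R) 2) -(rmorph_nat (real_complex R) d) -rmorphM -fmorphV -rmorphM lecR.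
  rewrite subr_ge0.
  apply: (le_trans (y := (lam%:C + 1) * 2%:R / d%:R * N)); last first.
    by rewrite ler_wpM2r.
  have -> : (lam%:C + 1) * 2%:R / d%:R * N = (lam%:C + 1) / d%:R * (2%:R * N) by ring.
  have -> : (lam%:C + 1) * (T / d%:R) = (lam%:C + 1) / d%:R * T by ring.
  by rewrite ler_wpM2l // divr_ge0 // ler0n.
- move=> Hl; have [k dk] : exists k, d = k.+2 by exists d.-2; lia.
  subst d.
  exists (pid_mx 2); split.
    by rewrite /schmidt_rank rank_pid_mx.
  rewrite expval_form cj_pid pid_mx_id // tr_pid2.
  have hl : lam * (k.+2%:R - 2) < 2 by rewrite -ltr_pdivlMr.
  have key : lam * 2 < (lam + 1) * ((2 * 2)%N%:R / k.+2%:R).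
    by rewrite natrM mulrA ltr_pdivlMr //; nra.
  rewrite bE rmorph_nat subr_lt0 -(rmorph_nat (real_complex R) 2) -(rmorph_nat (real_complex R) k.+2).
  rewrite -!rmorphM -fmorphV -!rmorphM ltcR. exact: key.
Qed.
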